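(* For every integer $n\geq 1$, $$F_n(x):=\sum_{k\geq 0} a(n,k)\,x^k=\prod_{i=0}^{n-1}\left(1+x^{2^i}+x^{2\cdot 2^i}\right).$$
   Context: Stern's triangle is the array of integers $a(n,k)$, $n\geq 0$, $k\in\mathbb{Z}$, defined as follows. Row $n$ consists of the entries $a(n,0),\dots,a(n,N_n)$ with $N_n=2^{n+1}-2$, and $a(n,k)=0$ if $k<0$ or $k>N_n$. Row $0$ is the single entry $a(0,0)=1$. Row $n+1$ is obtained from row $n$ (with $N=N_n$) by $a(n+1,0)=1$, $a(n+1,2j+1)=a(n,j)$ for $0\leq j\leq N$, $a(n+1,2j+2)=a(n,j)+a(n,j+1)$ for $0\leq j\leq N-1$, and $a(n+1,2N+2)=1$. In words: each entry of row $n$ is copied directly below into row $n+1$, the sum of each two consecutive entries of row $n$ is placed between them in row $n+1$, and row $n+1$ begins and ends with $1$. The first rows are $1$; $1,1,1$; $1,1,2,1,2,1,1$; $1,1,2,1,3,2,3,1,3,2,3,1,2,1,1$. *)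

(* Defs.v *)
From mathcomp Require Import all_boot all_order all_algebra.
Set Implicit Arguments. Unset Strict Implicit. Unset Printing Implicit Defensive.
Import GRing.Theory.
Local Open Scope ring_scope.

Definition Nlast (n : nat) : nat := (2 ^ n.+1 - 2)%N.

(* Stern's triangle a(n,k), for k : nat (entries with k < 0 are 0 and
   do not contribute to the generating function). Literal transcription
   of the recursive definition. *)
Fixpoint stern (n k : nat) {struct n} : nat :=
  match n with
  | 0 => (k == 0)%N : nat
  | m.+1 =>
      let N := Nlast m in
      if (k == 0)%N then 1%N
      else if (k == (2 * N).+2)%N then 1%N
      else if ((2 * N).+2 < k)%N then 0%N
      else if odd k then stern m k./2             (* k = 2j+1 -> a(m,j) *)
      else (stern m k.-2./2 + stern m k./2)%N     (* k = 2j+2 -> a(m,j)+a(m,j+1) *)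
  end.

Definition sternF (n : nat) : {poly int} :=
  \poly_(k < (Nlast n).+1) ((stern n k)%:R : int).

(* Main.v *)
Require Import Defs.
From mathcomp Require Import all_boot all_order all_algebra.
From mathcomp Require Import zify.
Import GRing.Theory.
Local Open Scope ring_scope.
Lemma Nlast_S m : Nlast m.+1 = (2 * Nlast m).+2.
Proof. rewrite /Nlast !expnS. have := expn_gt0 2 m. lia. Qed.

Lemma stern_big n k : (Nlast n < k)%N -> stern n k = 0%N.
Proof.
case: n => [|m] /=; first by rewrite /Nlast; case: k.
rewrite Nlast_S => H.
have -> : (k == 0)%N = false by lia.
have -> : (k == (2 * Nlast m).+2)%N = false by lia.
by rewrite H.
Qed.

Lemma stern_0 n : stern n 0 = 1%N.
Proof. by case: n. Qed.

Lemma stern_last n : stern n (Nlast n) = 1%N.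
Proof.
case: n => [|m] //=. rewrite Nlast_S. by rewrite eqxx.
Qed.

Lemma stern_S m k : stern m.+1 k =
  if odd k then stern m k./2 else (stern m k./2 + (if k == 0%N then 0 else stern m k.-2./2))%N.
Proof.
rewrite /=.
case: (eqVneq k 0%N) => [->|k0]; first by rewrite stern_0.
case: (eqVneq k (2 * Nlast m).+2) => [->|kN].
  have -> : odd (2 * Nlast m).+2 = false by rewrite /= oddM.
  have -> : (2 * Nlast m).+2./2 = (Nlast m).+1 by rewrite -divn2; lia.
  have -> : (2 * Nlast m).+2.-2./2 = (Nlast m) by rewrite -divn2; lia.
  by rewrite stern_big ?stern_last.
case: ifP => // H.
rewrite (@stern_big m k./2); last by rewrite -divn2; lia.
case: ifP => // ko.
  have [j hj] : exists j, k = j.*2 by exists k./2; rewrite -{1}(odd_double_half k) ko.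
  subst k; have -> : (j.*2).-2 = (j.-1).*2 by rewrite -!muln2; lia.
  rewrite doubleK stern_big //; rewrite -!muln2 in H; lia.
by rewrite addnC.
Qed.

Definition G (n : nat) : {poly int} := \prod_(i < n) (1 + 'X^(2 ^ i) + 'X^(2 * 2 ^ i)).

Lemma compXn (a : nat) : ('X^a \Po 'X^2 : {poly int}) = 'X^(2 * a).
Proof. by rewrite rmorphXn /= comp_polyX -exprM. Qed.

Lemma G_rec n : G n.+1 = (1 + 'X + 'X^2) * (G n \Po 'X^2).
Proof.
rewrite /G big_ord_recl expn0 muln1 expr1; congr (_ * _).
rewrite rmorph_prod; apply: eq_bigr => i _ /=.
by rewrite !rmorphD /= rmorph1 !compXn expnS mulnA.
Qed.

Lemma coefG n k : (G n)`_k = (stern n k)%:R.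
Proof.
elim: n k => [|n IH] k.
  by rewrite /G big_ord0 coef1; case: k.
rewrite G_rec !mulrDl mul1r !coefD coefXM coefXnM !coef_comp_poly_Xn // !IH stern_S.
have [j [->|->]] : exists j, k = j.*2 \/ k = j.*2.+1.
  by exists k./2; rewrite -{1 3}(odd_double_half k); case: odd; [right|left].
- case: j => [|j]; first by rewrite (_ : 0.*2 %/ 2 = 0)%N // addn0 !addr0.
  rewrite !dvdn2 !divn2 subn2 /= !odd_double /= !doubleK.
  by rewrite addr0 natrD.
- rewrite !dvdn2 !divn2 /= !odd_double /= doubleK uphalf_double.
  case: j => [|j]; first by rewrite add0r addr0.
  by rewrite doubleS /= odd_double /= add0r addr0.
Qed.

Theorem theorem1p1 (n : nat) : (1 <= n)%N ->
  sternF n = \prod_(i < n) (1 + 'X^(2 ^ i) + 'X^(2 * 2 ^ i)).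
Proof.
move=> _; rewrite -/(G n); apply/polyP => k.
rewrite coef_poly coefG; case: ltnP => // H.
by rewrite stern_big.
Qed.
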